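(* Let $k\in\mathbb Z$ and let $(p_l)_{l\le k}$ be a probability distribution on $\{l\in\mathbb Z:l\le k\}$ with $p_k\in(0,1)$, $p_kp_{k-1}>0$, and $\sum_{l\le k}|l|p_l<\infty$. Let $r_i=\sum_{j\le k-i}p_j$ for $i\ge1$. Then, as $N\to\infty$, $$\sum_{i=2}^\infty\Big(\frac{r_i}{r_1}\Big)^N=O\Big(\Big(\frac{r_2}{r_1}\Big)^N\Big).$$ *)

(* Defs.v *)
From Stdlib Require Export Reals ZArith.
From Coquelicot Require Export Coquelicot.
Open Scope R_scope.

(* A distribution p on {l in Z | l <= k} is given as p : Z -> R; only its
   values at l <= k matter.  Sums over l <= k are written as series over
   m : nat with l = k - m. *)

Definition r (p : Z -> R) (k : Z) (i : nat) : R :=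
  Series (fun m : nat => p (k - Z.of_nat i - Z.of_nat m)%Z).

(* Main.v *)
Require Import Defs.
From Stdlib Require Import Lra Lia Psatz.
Open Scope R_scope.

Lemma Series_zero : Series (fun _ => 0) = 0.
Proof.
  rewrite (Series_ext _ (fun n : nat => 0 * 0)); [|intro; ring].
  rewrite Series_scal_l; ring.
Qed.

Lemma Series_nonneg (a : nat -> R) : (forall n, 0 <= a n) -> ex_series a -> 0 <= Series a.
Proof.
  intros H He. rewrite <- Series_zero. apply Series_le; auto.
  intro n; split; [lra|]. apply H.
Qed.

Lemma tail_step (c : nat -> R) (i : nat) : ex_series c ->
  Series (fun m => c (i + m)%nat) = c i + Series (fun m => c (S i + m)%nat).
Proof.
  intro He. rewrite Series_incr_1.
  - replace (i + 0)%nat with i by lia. f_equal. apply Series_ext; intro; f_equal; lia.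
  - apply (ex_series_incr_n c i). exact He.
Qed.

Lemma tail_mono (c : nat -> R) (i j : nat) : (forall n, 0 <= c n) -> ex_series c -> (i <= j)%nat ->
  Series (fun m => c (j + m)%nat) <= Series (fun m => c (i + m)%nat).
Proof.
  intros Hc He Hij. induction Hij as [|j Hij IH]; [lra|].
  rewrite (tail_step c j He) in IH. specialize (Hc j). lra.
Qed.

Lemma tele_series : is_series (fun j : nat => / INR (j + 1) - / INR (j + 2)) 1.
Proof.
  assert (Hs0 : forall n, sum_f_R0 (fun j : nat => / INR (j + 1) - / INR (j + 2)) n = 1 - / INR (n + 2)).
  { induction n as [|n IH].
    - simpl. field.
    - rewrite tech5. cbv beta. rewrite IH, !plus_INR, !S_INR, INR_0.
      assert (0 <= INR n) by apply pos_INR. field; lra. }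
  assert (Hs : forall n, sum_n (fun j : nat => / INR (j + 1) - / INR (j + 2)) n = 1 - / INR (n + 2)).
  { intro n. rewrite sum_n_Reals. apply Hs0. }
  assert (Hl : is_lim_seq (fun n => 1 - / INR (n + 2)) (1 - 0)).
  { apply is_lim_seq_minus'. apply is_lim_seq_const.
    apply (is_lim_seq_inv (fun n => INR (n + 2)) p_infty).
    apply (is_lim_seq_incr_n INR 2 p_infty). apply is_lim_seq_INR. discriminate. }
  rewrite Rminus_0_r in Hl.
  change (is_lim_seq (sum_n (fun j : nat => / INR (j + 1) - / INR (j + 2))) 1).
  eapply is_lim_seq_ext; [|exact Hl]. intro n; rewrite Hs; reflexivity.
Qed.

Lemma sq_bound (x c u : R) : 0 <= x -> 1 <= u -> x * (u + 1) <= c ->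
  x ^ 2 <= c ^ 2 * (/ u - / (u + 1)).
Proof.
  intros Hx Hu Hc.
  replace (/ u - / (u + 1)) with (/ (u * (u + 1))) by (field; repeat split; intro; lra).
  assert (A : 0 <= x * (u + 1)) by (apply Rmult_le_pos; lra).
  assert (B : (x * (u + 1)) ^ 2 <= c ^ 2) by (apply pow_incr; lra).
  assert (D : 0 <= x ^ 2 * (u + 1)) by (apply Rmult_le_pos; [apply pow2_ge_0|lra]).
  assert (H1 : x ^ 2 * (u * (u + 1)) <= c ^ 2) by (simpl in *; nra).
  assert (Hp : 0 < u * (u + 1)) by nra.
  replace (x ^ 2) with (x ^ 2 * (u * (u + 1)) * / (u * (u + 1))) by (field; repeat split; intro; lra).
  apply Rmult_le_compat_r; [left; apply Rinv_0_lt_compat; lra | exact H1].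
Qed.

Lemma pow_bound (x q B : R) (N : nat) : (2 <= N)%nat -> 0 <= x <= q -> x ^ 2 <= B ->
  x ^ N <= q ^ (N - 2) * B.
Proof.
  intros HN Hx HB.
  replace N with ((N - 2) + 2)%nat at 1 by lia. rewrite pow_add.
  apply Rmult_le_compat; [apply pow_le; lra | apply pow_le; lra | apply pow_incr; lra | exact HB].
Qed.

Theorem lemma6p3 (k : Z) (p : Z -> R)
  (Hnonneg : forall l : Z, (l <= k)%Z -> 0 <= p l)
  (Hsum : is_series (fun m : nat => p (k - Z.of_nat m)%Z) 1)
  (Hpk : 0 < p k < 1)
  (Hpk1 : p k * p (k - 1)%Z > 0)
  (Hmoment : ex_series (fun m : nat => Rabs (IZR (k - Z.of_nat m)) * p (k - Z.of_nat m)%Z)) :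
  exists C : R, exists N0 : nat, forall N : nat, (N0 <= N)%nat ->
    ex_series (fun i : nat => (r p k (i + 2) / r p k 1) ^ N) /\
    Rabs (Series (fun i : nat => (r p k (i + 2) / r p k 1) ^ N))
      <= C * Rabs ((r p k 2 / r p k 1) ^ N).
Proof.
  set (a := fun m : nat => p (k - Z.of_nat m)%Z).
  assert (Ha : forall m, 0 <= a m) by (intro m; apply Hnonneg; lia).
  assert (Hea : ex_series a) by (exact (ex_intro _ 1 Hsum)).
  set (b := fun m : nat => INR m * a m).
  assert (Hb : forall m, 0 <= b m) by (intro m; unfold b; apply Rmult_le_pos; [apply pos_INR | apply Ha]).
  assert (Heb : ex_series b).
  { assert (E2 : ex_series (fun m => a m * Rabs (IZR k))) by (apply ex_series_scal_r; exact Hea).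
    eapply (@ex_series_le R_AbsRing R_CompleteNormedModule); [| apply (ex_series_plus _ _ Hmoment E2)].
    intro m. unfold norm; simpl; unfold abs; simpl. unfold plus; simpl.
    rewrite Rabs_pos_eq by apply Hb. unfold b. fold (a m).
    assert (Hm : INR m <= Rabs (IZR (k - Z.of_nat m)) + Rabs (IZR k)).
    { rewrite INR_IZR_INZ, minus_IZR.
      pose proof (Rabs_triang_inv (IZR (Z.of_nat m)) (IZR k)) as T1.
      rewrite Rabs_minus_sym in T1. pose proof (Rle_abs (IZR (Z.of_nat m))). lra. }
    specialize (Ha m). nra. }
  set (rr := fun i : nat => Series (fun m => a (i + m)%nat)).
  assert (Hr : forall i, r p k i = rr i).
  { intro i. unfold r, rr. apply Series_ext. intro m. unfold a. f_equal. lia. }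
  assert (Hrpos : forall i, 0 <= rr i).
  { intro i. apply Series_nonneg; [intro; apply Ha | apply (ex_series_incr_n a i); exact Hea]. }
  assert (Hrmono : forall i j, (i <= j)%nat -> rr j <= rr i).
  { intros i j Hij. apply tail_mono; auto. }
  set (M := Series b).
  assert (Hmarkov : forall i, INR i * rr i <= M).
  { intro i. unfold rr. rewrite <- Series_scal_l.
    apply Rle_trans with (Series (fun m => b (i + m)%nat)).
    - apply Series_le; [|apply (ex_series_incr_n b i); exact Heb].
      intro m. unfold b. rewrite plus_INR. specialize (Ha (i+m)%nat).
      assert (0 <= INR i) by apply pos_INR. assert (0 <= INR m) by apply pos_INR. nra.
    - apply Rle_trans with (Series (fun m => b (0 + m)%nat)).
      + apply tail_mono; auto; lia.
      + right. unfold M. apply Series_ext. intro; reflexivity. }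
  assert (Hr12 : rr 1%nat = a 1%nat + rr 2%nat) by (unfold rr; apply (tail_step a 1 Hea)).
  assert (Ha1 : 0 < a 1%nat).
  { unfold a. replace (k - Z.of_nat 1)%Z with (k - 1)%Z by lia.
    destruct Hpk as [Hpk0 _]. assert (Hx : 0 <= p (k - 1)%Z) by (apply Hnonneg; lia).
    destruct Hx as [Hx|Hx]; [exact Hx|]. rewrite <- Hx in Hpk1. lra. }
  assert (Hr1 : 0 < rr 1%nat) by (specialize (Hrpos 2%nat); lra).
  set (q := rr 2%nat / rr 1%nat).
  set (c := M / rr 1%nat).
  assert (HM : 0 <= M) by (specialize (Hmarkov 0%nat); simpl in Hmarkov; specialize (Hrpos 0%nat); lra).
  assert (Hc : 0 <= c) by (unfold c; apply Rdiv_le_0_compat; lra).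
  assert (HT := tele_series).
  set (T := fun j : nat => / INR (j + 1) - / INR (j + 2)).
  assert (HeT : ex_series T) by (exact (ex_intro _ 1 HT)).
  assert (HTpos : forall j, 0 <= T j).
  { intro j. unfold T. rewrite !plus_INR. assert (0 <= INR j) by apply pos_INR.
    simpl INR. apply Rge_le, Rge_minus, Rle_ge, Rinv_le_contravar; lra. }
  assert (Hx : forall j, 0 <= rr (j + 2)%nat / rr 1%nat <= q).
  { intro j. split; [apply Rdiv_le_0_compat; auto|].
    unfold q. apply Rmult_le_compat_r; [left; apply Rinv_0_lt_compat; lra|]. apply Hrmono; lia. }
  assert (Hx2 : forall j, (rr (j + 2)%nat / rr 1%nat) ^ 2 <= c ^ 2 * T j).
  { intro j. unfold T. replace (INR (j + 2)) with (INR (j + 1) + 1) by (rewrite !plus_INR; simpl; ring). apply sq_bound.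
    - apply Hx.
    - rewrite plus_INR. assert (0 <= INR j) by apply pos_INR. simpl. lra.
    - replace (INR (j + 1) + 1) with (INR (j + 2)) by (rewrite !plus_INR; simpl; ring).
      unfold c. specialize (Hmarkov (j + 2)%nat).
      apply Rmult_le_reg_r with (rr 1%nat); auto.
      replace (rr (j + 2)%nat / rr 1%nat * INR (j + 2) * rr 1%nat) with (INR (j + 2) * rr (j + 2)%nat) by (field; repeat split; intro; lra).
      replace (M / rr 1%nat * rr 1%nat) with M by (field; repeat split; intro; lra). exact Hmarkov. }
  assert (Hq : 0 <= q) by (unfold q; apply Rdiv_le_0_compat; auto).
  exists (c ^ 2 * Series T / q ^ 2), 2%nat.
  intros N HN.
  assert (Hterm : forall j, 0 <= (r p k (j + 2) / r p k 1) ^ N <= q ^ (N - 2) * (c ^ 2 * T j)).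
  { intro j. rewrite !Hr. split; [apply pow_le; apply Hx|]. apply pow_bound; auto. }
  assert (HeS : ex_series (fun j => q ^ (N - 2) * (c ^ 2 * T j))).
  { apply (ex_series_ext (fun j => (c ^ 2 * T j) * q ^ (N - 2))); [intro; apply Rmult_comm|].
    apply ex_series_scal_r. apply (ex_series_ext (fun j => T j * c ^ 2)); [intro; apply Rmult_comm|].
    apply ex_series_scal_r. exact HeT. }
  split.
  - eapply (@ex_series_le R_AbsRing R_CompleteNormedModule); [|exact HeS]. intro j. unfold norm; simpl; unfold abs; simpl.
    rewrite Rabs_pos_eq by apply Hterm. apply Hterm.
  - rewrite Rabs_pos_eq.
    2: { apply Series_nonneg; [intro; apply Hterm|]. eapply (@ex_series_le R_AbsRing R_CompleteNormedModule); [|exact HeS].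
         intro j. unfold norm; simpl; unfold abs; simpl. rewrite Rabs_pos_eq by apply Hterm. apply Hterm. }
    rewrite !Hr. fold q. rewrite Rabs_pos_eq by (apply pow_le; exact Hq).
    destruct Hq as [Hq | Hq].
    + apply Rle_trans with (Series (fun j => q ^ (N - 2) * (c ^ 2 * T j))).
      { apply Series_le; auto. intro j. rewrite <- !Hr. apply Hterm. }
      rewrite Series_scal_l, Series_scal_l.
      replace (q ^ N) with (q ^ (N - 2) * q ^ 2).
      2: { rewrite <- pow_add. f_equal. lia. }
      right. field. intro; lra.
    + apply Rle_trans with (Series (fun j => 0 * T j)).
      { apply Series_le; auto. intro j. rewrite !Hr. split; [apply pow_le; apply Hx|].
        assert (Hz : rr (j + 2)%nat / rr 1%nat = 0) by (specialize (Hx j); lra).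
        rewrite Hz, pow_i by lia. lra.
        apply (ex_series_ext (fun j => T j * 0)); [intro; apply Rmult_comm|]. apply ex_series_scal_r; exact HeT. }
      rewrite Series_scal_l, <- Hq, (pow_i N) by lia. rewrite Rmult_0_r, Rmult_0_l. lra.
Qed.
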